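(* Let $P_1$ and $P_2$ be non-constant rational functions with real coefficients such that $\mathbb{R}(P_1,P_2)=\mathbb{R}(z)$, i.e. $P_1$ and $P_2$ generate the whole field $\mathbb{R}(z)$ of real rational functions. Then $P_1^{-1}(\widehat{\mathbb{R}})\cap P_2^{-1}(\widehat{\mathbb{R}})=\widehat{\mathbb{R}}\cup A$, where $A$ is a finite subset of $\mathbb{CP}^1$.
   Context: $\widehat{\mathbb{R}}=\mathbb{R}\cup\{\infty\}\subset\mathbb{CP}^1$ denotes the projectively extended real line; $P_1,P_2$ are viewed as maps $\mathbb{CP}^1\to\mathbb{CP}^1$ and preimages are taken in $\mathbb{CP}^1$. *)

(* Defs.v *)
From HB Require Import structures.
From mathcomp Require Import all_boot all_order all_algebra.
From mathcomp Require Import reals.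
From mathcomp Require Import complex.
From mathcomp Require Import fraction.
Set Implicit Arguments. Unset Strict Implicit. Unset Printing Implicit Defensive.
Import Order.TTheory GRing.Theory Num.Theory.
Local Open Scope ring_scope.

(* The projective line CP^1 = C ∪ {∞}: [None] is ∞, [Some z] is z. *)
Definition CP1 (R : realType) := option R[i].

Definition in_Rhat (R : realType) (w : CP1 R) : bool :=
  match w with None => true | Some z => Im z == 0 end.

Definition ceval (R : realType) (p : {poly R}) (z : R[i]) : R[i] :=
  (map_poly (real_complex R) p).[z].

(* The rational function p/q (p, q coprime, q <> 0) as a map CP^1 -> CP^1. *)
Definition ratmap (R : realType) (p q : {poly R}) (w : CP1 R) : CP1 R :=
  match w with
  | Some z => if ceval q z == 0 then None else Some (ceval p z / ceval q z)
  | None => if (size q < size p)%N then None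
            else if size p == size q then Some ((lead_coef p / lead_coef q)%:C)%C
            else Some 0
  end.

Definition RZ (R : realType) := {fraction {poly R}}.
Definition frac_of (R : realType) (p q : {poly R}) : RZ R := FracField.tofrac p / FracField.tofrac q.

Definition eval2 (R : realType) (Q : {poly {poly R}}) (x y : RZ R) : RZ R :=
  (map_poly (fun c : {poly R} => (map_poly (fun a : R => FracField.tofrac (a%:P)) c).[x]) Q).[y].

(* R(f1, f2) = R(z): the subfield of R(z) generated over R by f1, f2, i.e.
   { A(f1,f2)/B(f1,f2) : A, B in R[X,Y], B(f1,f2) <> 0 }, is all of R(z).
   Since it is always contained in R(z), this holds iff it contains z. *)
Definition generates_Rz (R : realType) (f1 f2 : RZ R) : Prop :=
  forall f : RZ R, exists A B : {poly {poly R}},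
    eval2 B f1 f2 != 0 /\ f = eval2 A f1 f2 / eval2 B f1 f2.

(* Main.v *)
Require Import Defs.
From HB Require Import structures.
From mathcomp Require Import all_boot all_order all_algebra.
From mathcomp Require Import reals complex fraction.
From mathcomp Require Import ring.
Import Order.TTheory GRing.Theory Num.Theory.
Local Open Scope ring_scope.

Section T.
Variable R : realType.

Lemma rc_real (x : R) : (x%:C)%C \is Num.real.
Proof. by rewrite realE !lecE /= eqxx /= le_total. Qed.

Lemma inRhatE (u : R[i]) : in_Rhat (Some u) = (u \is Num.real).
Proof. by apply/idP/idP => [/eqP/Creal_ImP | /Creal_ImP/eqP]. Qed.

Lemma ceval_real (p : {poly R}) z : z \is Num.real -> ceval p z \is Num.real.
Proof.
move=> zr; rewrite /ceval horner_coef; apply: rpred_sum => i _.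
by rewrite coef_map; apply: rpredM; [exact: rc_real | exact: rpredX].
Qed.

Lemma cevalM (p q : {poly R}) z : ceval (p * q) z = ceval p z * ceval q z.
Proof. by rewrite /ceval rmorphM hornerM. Qed.

Lemma roots_fin (p : {poly R[i]}) : p != 0 -> exists s : seq R[i], forall z, root p z -> z \in s.
Proof.
move=> p0; have [s Hs] := closed_field_poly_normal p.
exists s => z; rewrite Hs rootZ ?lead_coef_eq0 // root_prod_XsubC //.
Qed.
Lemma aux (F : fieldType) (c A B X Y B' Y' : F) :
  B' != 0 -> Y' != 0 ->
  c * (A * B * X * Y) = B * B' * (Y * Y') * (c * (A / B') * (X / Y')).
Proof. move=> h1 h2; field; by rewrite h1 h2. Qed.

Notation tf := (@FracField.tofrac {poly R}).

Definition Qt (Q : {poly {poly R}}) (N1 N2 : nat) (p1 q1 p2 q2 : {poly R}) : {poly R} :=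
  \sum_(j < N2) \sum_(i < N1)
     ((Q`_j)`_i)%:P * (p1 ^+ i * q1 ^+ (N1 - i) * p2 ^+ j * q2 ^+ (N2 - j)).

Lemma L1 (Q : {poly {poly R}}) (N1 N2 : nat) (p1 q1 p2 q2 : {poly R}) : q1 != 0 -> q2 != 0 -> (size Q <= N2)%N ->
  (forall j : nat, leq (size Q`_j) N1) ->
  tf (Qt Q N1 N2 p1 q1 p2 q2) =
  tf q1 ^+ N1 * tf q2 ^+ N2 * eval2 Q (frac_of p1 q1) (frac_of p2 q2).
Proof.
move=> q10 q20 sQ sQj.
have t1 : tf q1 != 0 by rewrite tofrac_eq0.
have t2 : tf q2 != 0 by rewrite tofrac_eq0.
rewrite /eval2 (@horner_coef_wide _ N2); last first.
  by apply: leq_trans sQ; apply: size_poly.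
rewrite mulr_sumr rmorph_sum; apply: eq_bigr => j _.
rewrite coef_map_id0; last by rewrite map_poly0 horner0.
rewrite (@horner_coef_wide _ N1); last by apply: leq_trans (sQj j); apply: size_poly.
rewrite mulr_suml mulr_sumr rmorph_sum; apply: eq_bigr => i _.
rewrite coef_map_id0; last by rewrite rmorph0.
rewrite /frac_of !rmorphM !rmorphXn /=.
have -> : tf q1 ^+ N1 = tf q1 ^+ (N1 - i) * tf q1 ^+ i by rewrite -exprD subnK // ltnW.
have -> : tf q2 ^+ N2 = tf q2 ^+ (N2 - j) * tf q2 ^+ j by rewrite -exprD subnK // ltnW.
rewrite !expr_div_n.
exact: (@aux {fraction {poly R}} _ _ _ _ _ _ _ (expf_neq0 i t1) (expf_neq0 j t2)).
Qed.

Lemma L2 (Q : {poly {poly R}}) (N1 N2 : nat) (p1 q1 p2 q2 : {poly R}) (z : R[i]) :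
  ceval q1 z != 0 -> ceval q2 z != 0 ->
  ceval (Qt Q N1 N2 p1 q1 p2 q2) z = ceval q1 z ^+ N1 * ceval q2 z ^+ N2 *
   \sum_(j < N2) \sum_(i < N1) ((Q`_j)`_i)%:C%C * (ceval p1 z / ceval q1 z) ^+ i
        * (ceval p2 z / ceval q2 z) ^+ j.
Proof.
move=> t1 t2.
rewrite {1}/ceval rmorph_sum horner_sum mulr_sumr; apply: eq_bigr => j _.
rewrite rmorph_sum horner_sum mulr_sumr; apply: eq_bigr => i _.
rewrite !rmorphM /= !hornerM map_polyC hornerC !rmorphXn !horner_exp -!/(ceval _ z).
have -> : ceval q1 z ^+ N1 = ceval q1 z ^+ (N1 - i) * ceval q1 z ^+ i by rewrite -exprD subnK // ltnW.
have -> : ceval q2 z ^+ N2 = ceval q2 z ^+ (N2 - j) * ceval q2 z ^+ j by rewrite -exprD subnK // ltnW.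
rewrite !expr_div_n.
exact: (@aux R[i] _ _ _ _ _ _ _ (expf_neq0 i t1) (expf_neq0 j t2)).
Qed.

Lemma Lreal (Q : {poly {poly R}}) (N1 N2 : nat) (a b : R[i]) :
  a \is Num.real -> b \is Num.real ->
  \sum_(j < N2) \sum_(i < N1) ((Q`_j)`_i)%:C%C * a ^+ i * b ^+ j \is Num.real.
Proof.
move=> ar br; apply: rpred_sum => j _; apply: rpred_sum => i _.
by rewrite !rpredM ?rpredX ?rc_real.
Qed.

Lemma aux3 (F : fieldType) (e1 e2 c : F) : e2 != 0 -> e1 / e2 * (c * e2) = c * e1.
Proof. move=> h; field; exact: h. Qed.
End T.

Theorem theorem3 (R : realType) (p1 q1 p2 q2 : {poly R}) :
  q1 != 0 -> coprimep p1 q1 -> ((1 < size p1) || (1 < size q1))%N ->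
  q2 != 0 -> coprimep p2 q2 -> ((1 < size p2) || (1 < size q2))%N ->
  generates_Rz (frac_of p1 q1) (frac_of p2 q2) ->
  exists A : seq (CP1 R), forall w : CP1 R,
    (in_Rhat (ratmap p1 q1 w) && in_Rhat (ratmap p2 q2 w))
    = (in_Rhat w || (w \in A)).
Proof.
move=> q10 _ _ q20 _ _ gen.
have [A [B [HB HX]]] := gen (FracField.tofrac 'X).
set N2 := (size A + size B)%N.
set N1 := (\sum_(j < N2) (size (A`_j)%R + size (B`_j)%R))%N.
have bj : forall j : nat, (size (A`_j)%R + size (B`_j)%R <= N1)%N.
  move=> j; case: (ltnP j N2) => hj.
    by rewrite /N1 (bigD1 (Ordinal hj)) //= leq_addr.
  rewrite !nth_default ?size_poly0 //.
    by apply: leq_trans hj; rewrite leq_addl.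
  by apply: leq_trans hj; rewrite leq_addr.
have bA : forall j : nat, leq (size A`_j) N1 by move=> j; exact: leq_trans (leq_addr _ _) (bj j).
have bB : forall j : nat, leq (size B`_j) N1 by move=> j; exact: leq_trans (leq_addl _ _) (bj j).
have cA := @L1 R A N1 N2 p1 q1 p2 q2 q10 q20 (leq_addr _ _) bA.
have cB := @L1 R B N1 N2 p1 q1 p2 q2 q10 q20 (leq_addl _ _) bB.
set At := Qt R A N1 N2 p1 q1 p2 q2 in cA.
set Bt := Qt R B N1 N2 p1 q1 p2 q2 in cB.
have t1 : FracField.tofrac q1 != 0 by rewrite tofrac_eq0.
have t2 : FracField.tofrac q2 != 0 by rewrite tofrac_eq0.
have Bt0 : Bt != 0.
  rewrite -(tofrac_eq0 (R:={poly R})) cB.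
  exact: (mulf_neq0 (mulf_neq0 (expf_neq0 N1 t1) (expf_neq0 N2 t2)) HB).
have XB : 'X * Bt = At.
  apply/eqP; rewrite -(tofrac_eq (R:={poly R})) tofracM cA cB HX.
  exact/eqP/(@aux3 {fraction {poly R}} _ _ _ HB).
pose P := map_poly (real_complex R) (q1 * q2 * Bt).
have P0 : P != 0 by rewrite map_poly_eq0 !mulf_neq0.
have [s Hs] := @roots_fin R P P0.
exists [seq w <- map Some s | in_Rhat (ratmap p1 q1 w) && in_Rhat (ratmap p2 q2 w)].
case=> [z|]; last first.
  have H : forall p q : {poly R}, in_Rhat (ratmap p q None).
    move=> p q; rewrite /ratmap; case: ifP => // _.
    by case: ifP => _; rewrite inRhatE ?rc_real ?real0.
  by rewrite !H.
rewrite mem_filter (mem_map (@Some_inj _)) inRhatE.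
have Hp : forall p q : {poly R}, z \is Num.real -> in_Rhat (ratmap p q (Some z)).
  move=> p q zr; rewrite /ratmap; case: ifP => // _.
  by rewrite inRhatE rpredM ?rpredV ?ceval_real.
case: (boolP (z \is Num.real)) => zr; first by rewrite !Hp.
rewrite orFb.
case lhs: (in_Rhat (ratmap p1 q1 (Some z)) && in_Rhat (ratmap p2 q2 (Some z))) => //=.
symmetry; apply: Hs; apply: contraNT zr => nroot.
have : ceval (q1 * q2 * Bt) z != 0 by [].
rewrite !cevalM !mulf_eq0 !negb_or => /andP[/andP[h1 h2] h3].
move: lhs; rewrite /ratmap (negbTE h1) (negbTE h2) !inRhatE => /andP[ar br].
have eq : z * ceval Bt z = ceval At z.
  by rewrite -XB cevalM /ceval map_polyX hornerX.
rewrite (@L2 R _ N1 N2 p1 q1 p2 q2 z h1 h2) in h3.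
rewrite !(@L2 R _ N1 N2 p1 q1 p2 q2 z h1 h2) in eq.
set SB := (X in _ * X != 0) in h3 eq.
set c := (X in X * SB != 0) in h3 eq.
set SA := (X in _ = c * X) in eq.
have c0 : c != 0 by move: h3; rewrite mulf_eq0 negb_or => /andP[].
have SB0 : SB != 0 by move: h3; rewrite mulf_eq0 negb_or => /andP[].
rewrite mulrCA in eq; have eq' := mulfI c0 eq.
have -> : z = SA / SB by rewrite -eq' mulfK.
by rewrite rpredM ?rpredV ?Lreal.
Qed.
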